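(* Let $r\ge2$ and let $F$ be an $r$-critical graph. Then $\rho_F-(1-1/r)>0$ (where this holds trivially if $\rho_F=\infty$).
   Context: A graph $F$ is $r$-critical if $\chi(F)=r+1$ and $F$ contains an edge $e$ with $\chi(F-e)=r$. A vertex $u$ of $F$ is critical if $\chi(F-u)=r$. Let $\mathrm{Aut}(F)$ be the number of automorphisms of $F$. For $\boldsymbol{\xi}\in\mathbb{R}^r$, $P_F(\boldsymbol{\xi})=\frac{1}{\mathrm{Aut}(F)}\sum_{u\text{ critical}}\sum_{\chi_u}\prod_{i=1}^r r^{-x_i}\xi_i^{y_i}$, the inner sum over proper colorings $\chi_u:V(F)\setminus\{u\}\to[r]$ of $F-u$, with $y_i$ (resp. $x_i$) the number of neighbors (resp. non-neighbors other than $u$) of $u$ colored $i$. Let $c(n,F)$ be the minimum number of copies of $F$ in a graph obtained from the Turán graph $T_r(n)$ by adding one edge; there is a constant $\alpha_F>0$ with $c(n,F)=\alpha_F n^{f-2}+O(n^{f-3})$, $f=|V(F)|$. Let $\mathcal{S}=[0,1/r]^r$, $\mathcal{S}_\rho=\{\boldsymbol{\xi}\in\mathcal{S}:\sum_i\xi_i=\rho\}$, and $p(\rho)=\min\{P_F(\boldsymbol{\xi}):\boldsymbol{\xi}\in\mathcal{S}_\rho\}$. If $P_F$ has total degree at least $r+1$, let $\rho_F=\inf\{\rho\in(\frac{r-1}{r},1): p(\rho)\le\alpha_F(\rho-\frac{r-1}{r})\}$; if $P_F$ has total degree $r$, or $p(\rho)>\alpha_F(\rho-\frac{r-1}r)$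 for all $\rho\in(\frac{r-1}r,1)$, let $\rho_F=\infty$. *)

(* Defs.v *)
From HB Require Import structures.
From mathcomp Require Import all_boot all_order all_algebra all_fingroup.
From mathcomp Require Import mpoly.
From mathcomp Require Import all_classical all_reals ereal.
Set Implicit Arguments.
Unset Strict Implicit.
Unset Printing Implicit Defensive.
Import Order.TTheory GRing.Theory Num.Theory.

Section Graphs.
Variable V : finType.
Local Open Scope set_scope.

Definition simple_graph (adj : rel V) : Prop :=
  (forall x, ~~ adj x x) /\ (forall x y, adj x y = adj y x).

Definition colorable (adj : rel V) (A : {set V}) (k : nat) : bool :=
  [exists c : {ffun V -> 'I_k},
     [forall x, forall y, ((x \in A) && (y \in A) && adj x y) ==> (c x != c y)]].

Lemma colorable_card (adj : rel V) (A : {set V}) (adjI : forall x, ~~ adj x x) :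
  exists k, colorable adj A k.
Proof.
exists #|V|; apply/existsP; exists [ffun x => enum_rank x].
apply/forallP => x; apply/forallP => y; apply/implyP => /andP[_ hxy].
rewrite !ffunE; apply/negP => /eqP /enum_rank_inj exy; subst y.
by move: (adjI x); rewrite hxy.
Qed.


(** Chromatic number of the subgraph of the irreflexive relation [adj]
    induced on [A]: least k admitting a proper k-colouring. (Loops are
    removed so that the definition is total; graphs here are simple.) *)
Definition irr (adj : rel V) : rel V := fun x y => (x != y) && adj x y.

Lemma irr_irrefl (adj : rel V) x : ~~ irr adj x x.
Proof. by rewrite /irr eqxx. Qed.

Definition chi (adj : rel V) (A : {set V}) : nat :=
  ex_minn (colorable_card A (@irr_irrefl adj)).

Definition remove_edge (adj : rel V) (a b : V) : rel V :=
  fun x y => adj x y && ~~ (((x == a) && (y == b)) || ((x == b) && (y == a))).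

Definition r_critical (r : nat) (adj : rel V) : Prop :=
  chi adj [set: V]%SET = r.+1 /\
  exists a b, adj a b /\ chi (remove_edge adj a b) [set: V]%SET = r.

Definition critical_vertex (r : nat) (adj : rel V) (u : V) : bool :=
  chi adj [set~ u]%SET == r.

Definition aut (adj : rel V) : nat :=
  #|[set s : {perm V} | [forall x, forall y, adj (s x) (s y) == adj x y]]|.

(** Number of copies of F (subgraphs isomorphic to F) in a graph [g] on 'I_n,
    computed as (#injective homomorphisms F -> g) / Aut(F). *)
Definition copies (adj : rel V) (n : nat) (g : rel 'I_n) : nat :=
  #|[set phi : {ffun V -> 'I_n} | injectiveb phi &&
      [forall x, forall y, adj x y ==> g (phi x) (phi y)]]| %/ aut adj.

End Graphs.

(** Turán graph T_r(n) on 'I_n: parts are residue classes mod r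
    (sizes differ by at most one), vertices adjacent iff in different parts. *)
Definition turan (r n : nat) : rel 'I_n := fun i j => (i %% r != j %% r)%N.

Definition turan_plus (r n : nat) (a b : 'I_n) : rel 'I_n :=
  fun i j => turan r i j || ((i == a) && (j == b)) || ((i == b) && (j == a)).

Definition addable (r n : nat) (a b : 'I_n) : bool := (a != b) && ~~ turan r a b.

(** The
    neutral element n^f is an upper bound on every copy count, so the value
    is the true minimum whenever such an edge exists (n > r). *)
Definition cnF (V : finType) (r : nat) (adj : rel V) (n : nat) : nat :=
  \big[minn/(n ^ #|V|)%N]_(p : 'I_n * 'I_n | addable r p.1 p.2)
     copies adj (turan_plus r p.1 p.2).

Section Poly.
Variable R : realType.
Local Open Scope set_scope.
Local Open Scope ring_scope.
Variables (V : finType) (r : nat) (adj : rel V).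

Definition proper_u (u : V) (c : {ffun {x : V | x != u} -> 'I_r}) : bool :=
  [forall x, forall y, adj (val x) (val y) ==> (c x != c y)].

Definition ycnt (u : V) (c : {ffun {x : V | x != u} -> 'I_r}) (i : 'I_r) : nat :=
  #|[set x : {x : V | x != u} | adj u (val x) && (c x == i)]|.
Definition xcnt (u : V) (c : {ffun {x : V | x != u} -> 'I_r}) (i : 'I_r) : nat :=
  #|[set x : {x : V | x != u} | ~~ adj u (val x) && (c x == i)]|.

Definition PF : mpoly.mpoly r R :=
  (aut adj)%:R^-1 *:
  \sum_(u : V | critical_vertex r adj u)
    \sum_(c : {ffun {x : V | x != u} -> 'I_r} | proper_u c)
      \prod_(i < r)
        ((r%:R ^- xcnt c i : R) *: (@mpoly.mpolyX r R (@mpoly.mnm1 r i)) ^+ ycnt c i).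

Definition PF_eval (xi : 'I_r -> R) : R := mpoly.meval xi PF.

Definition PF_totdeg : nat := (mpoly.mmeasure (@mpoly.mdeg r) PF).-1.

Definition S_rho (rho : R) : set ('I_r -> R) :=
  [set xi | (forall i, 0 <= xi i <= r%:R^-1) /\ \sum_(i < r) xi i = rho].

(** p(rho) = min { P_F(xi) : xi in S_rho } (the min exists by compactness;
    written as the infimum). *)
Definition p_rho (rho : R) : R := inf [set PF_eval xi | xi in S_rho rho].

(** rho_F, with alpha = alpha_F supplied as a parameter. *)
Definition rhoF (alpha : R) : \bar R :=
  if (r.+1 <= PF_totdeg)%N then
    ereal_inf [set rho%:E | rho in
      [set rho : R | (r%:R - 1) / r%:R < rho < 1 /\
                     p_rho rho <= alpha * (rho - (r%:R - 1) / r%:R)]]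
  else +oo%E.

End Poly.

Local Open Scope ring_scope.

Definition is_alphaF (R : realType) (V : finType) (r : nat) (adj : rel V)
  (alpha : R) : Prop :=
  exists (C : R) (N : nat), forall n : nat, (N <= n)%N ->
    `| (cnF r adj n)%:R - alpha * n%:R ^+ (#|V| - 2) | <= C * n%:R ^+ (#|V| - 3).

(* Main.v *)
Set Warnings "-notation-overridden,-ambiguous-paths,-notation-incompatible-prefix".
Require Import Defs.
From mathcomp Require Import all_boot all_order all_algebra all_fingroup.
From mathcomp Require Import mpoly.
From mathcomp Require Import all_classical all_reals ereal.
From mathcomp Require Import lra ring.
Import Order.TTheory GRing.Theory Num.Theory.
Set Implicit Arguments.
Unset Strict Implicit.
Unset Printing Implicit Defensive.

Lemma chi_le (V : finType) (adj : rel V) (A : {set V}) k :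
  colorable (irr adj) A k -> (chi adj A <= k)%N.
Proof. by rewrite /chi; case: ex_minnP => m _ H; apply: H. Qed.

Lemma chi_col (V : finType) (adj : rel V) (A : {set V}) :
  colorable (irr adj) A (chi adj A).
Proof. by rewrite /chi; case: ex_minnP. Qed.

Lemma mk_col (V : finType) (adj : rel V) (A : {set V}) k (c : V -> 'I_k) :
  (forall x y, x \in A -> y \in A -> x != y -> adj x y -> c x != c y) ->
  colorable (irr adj) A k.
Proof.
move=> H; apply/existsP; exists [ffun x => c x].
apply/forallP => x; apply/forallP => y; apply/implyP => /andP[/andP[xA yA]].
by rewrite /irr => /andP[nxy axy]; rewrite !ffunE; apply: H.
Qed.

Lemma no_rcol (V : finType) (adj : rel V) r (c : V -> 'I_r) :
  r_critical r adj -> (forall x y, x != y -> adj x y -> c x != c y) -> False.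
Proof.
move=> [hchi _] H.
have : (chi adj [set: V] <= r)%N.
  by apply: chi_le; apply: (@mk_col _ _ _ _ c) => x y _ _; apply: H.
by rewrite hchi ltnn.
Qed.

Lemma crit_of_col (V : finType) (adj : rel V) r (c : V -> 'I_r) (b : V) :
  r_critical r adj ->
  (forall x y, x != b -> y != b -> x != y -> adj x y -> c x != c y) ->
  critical_vertex r adj b.
Proof.
move=> hcrit H; rewrite /critical_vertex eqn_leq; apply/andP; split.
  apply: chi_le; apply: (@mk_col _ _ _ _ c) => x y.
  by rewrite !in_setC1 => xb yb; apply: H.
rewrite leqNgt; apply/negP => hlt.
set m := chi adj [set~ b] in hlt.
have /existsP[c' /forallP Hc'] := @chi_col _ adj [set~ b].
have mlr : (m <= r)%N by apply: ltnW.
pose c2 (x : V) : 'I_r := if x == b then Ordinal hlt else widen_ord mlr (c' x).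
apply: (@no_rcol _ _ _ c2 hcrit) => x y nxy axy.
rewrite /c2; have [xb|xb] := eqVneq x b; have [yb|yb] := eqVneq y b.
- by move: nxy; rewrite xb yb eqxx.
- by rewrite -val_eqE /= neq_ltn ltn_ord orbT.
- by rewrite -val_eqE /= neq_ltn ltn_ord.
have := Hc' x => /forallP /(_ y) /implyP; rewrite !in_setC1 xb yb /irr nxy axy.
by move=> /(_ isT); rewrite -!val_eqE.
Qed.

Lemma bigminn_le (I : finType) (P : pred I) (F : I -> nat) x j :
  P j -> (\big[minn/x]_(i | P i) F i <= F j)%N.
Proof.
move=> Pj; rewrite /index_enum; have : j \in Finite.enum I by rewrite -enumT mem_enum.
elim: (Finite.enum I) => [//|a s IH]; rewrite in_cons big_cons.
case/orP => [/eqP <-|js]; first by rewrite Pj geq_minl.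
by case: (P a); rewrite ?geq_min IH ?orbT.
Qed.

Lemma cover2 (T I : finType) (J : I -> finType) (A : {set T}) (P : pred I)
  (Q : forall i, pred (J i)) (B : forall i, J i -> {set T}) :
  (forall x, x \in A -> exists i, exists j : J i, [/\ P i, Q i j & x \in B i j]) ->
  (#|A| <= \sum_(i | P i) \sum_(j | Q i j) #|B i j|)%N.
Proof.
move=> H.
apply: (@leq_trans (\sum_(x in A) \sum_(i | P i) \sum_(j | Q i j) (x \in B i j : nat))).
  rewrite -sum1_card; apply: leq_sum => x /H [i [j [Pi Qj xB]]].
  rewrite (bigD1 i) //= (bigD1 j) //= xB; exact: leq_addr.
rewrite exchange_big /=; apply: leq_sum => i _.
rewrite exchange_big /=; apply: leq_sum => j _.
rewrite -sum1_card big_mkcond /= [X in (_ <= X)%N]big_mkcond /=.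
by apply: leq_sum => x _; case: (x \in A); case: (x \in B i j).
Qed.

Definition goodset (V : finType) r (adj : rel V) (i : 'I_r) (b : V) :
  {set {ffun {x : V | x != b} -> 'I_r}} :=
  [set c | proper_u adj c && (ycnt adj c i == 1%N)].

Definition Mcount (V : finType) r (adj : rel V) (i : 'I_r) : nat :=
  \sum_(b | critical_vertex r adj b) #|goodset adj i b|.

Lemma count_homs (V : finType) r (adj : rel V) (i : 'I_r) n (u0 v0 : 'I_n) :
  val u0 = val i -> val v0 = (val i + r)%N ->
  simple_graph adj -> r_critical r adj ->
  (#|[set phi : {ffun V -> 'I_n} | injectiveb phi &&
      [forall x, forall y, adj x y ==> turan_plus r u0 v0 (phi x) (phi y)]]|
   <= Mcount adj i * (n %/ r).+1 ^ (#|V| - 2))%N.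
Proof.
move=> hu0 hv0 [adj_irr adj_sym] hcrit.
have r0 : (0 < r)%N by apply: (leq_ltn_trans (leq0n _) (ltn_ord i)).
have u0r : (u0 %% r = i)%N by rewrite hu0 (modn_small (ltn_ord i)).
have v0r : (v0 %% r = i)%N by rewrite hv0 modnDr (modn_small (ltn_ord i)).
have uv : u0 != v0.
  by rewrite -val_eqE /= hu0 hv0 -{1}[val i]addn0 eqn_add2l eq_sym -lt0n.
set G := turan_plus r u0 v0.
set H := [set phi : {ffun V -> 'I_n} | _].
have hH : forall phi, phi \in H -> injective phi /\ forall x y, adj x y -> G (phi x) (phi y).
  move=> phi; rewrite inE => /andP[/injectiveP inj /forallP hf]; split => // x y axy.
  by have /forallP /(_ y) /implyP := hf x; apply.
pose B (b : V) (c : {ffun {x : V | x != b} -> 'I_r}) : {set {ffun V -> 'I_n}} :=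
  [set phi in H | (phi b == v0) && [forall x : {x : V | x != b}, (phi (val x) %% r)%N == c x]].
apply: (@leq_trans (\sum_(b | critical_vertex r adj b) \sum_(c | c \in goodset adj i b) #|B b c|)).
  apply: cover2 => phi phiH.
  have [inj hom] := hH phi phiH.
  pose col (x : V) : 'I_r := Ordinal (ltn_pmod (phi x) r0).
  have [a [b [aab pa pb]]] : exists a b, [/\ adj a b, phi a = u0 & phi b = v0].
    case: (boolP [exists a, exists b, adj a b && (phi a == u0) && (phi b == v0)]).
      by case/existsP => a /existsP [b /andP[/andP[h1 /eqP h2] /eqP h3]]; exists a, b.
    move=> hno; exfalso; apply: (@no_rcol _ adj r col hcrit) => x y _ axy.
    rewrite -val_eqE /=.
    have := hom x y axy; rewrite /G /turan_plus /turan.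
    case/orP => [/orP[//|/andP[/eqP h1 /eqP h2]]|/andP[/eqP h1 /eqP h2]].
    - by move: hno => /existsP; case; exists x; apply/existsP; exists y; rewrite axy h1 h2 !eqxx.
    - by move: hno => /existsP; case; exists y; apply/existsP; exists x; rewrite adj_sym axy h1 h2 !eqxx.
  have key : forall x y, x != b -> y != b -> adj x y -> (phi x %% r != phi y %% r)%N.
    move=> x y xb yb axy.
    have := hom x y axy; rewrite /G /turan_plus /turan.
    case/orP => [/orP[//|/andP[_ /eqP h2]]|/andP[/eqP h1 _]].
    - by move: yb; rewrite -h2 in pb; rewrite (inj _ _ pb) eqxx.
    - by move: xb; rewrite -h1 in pb; rewrite (inj _ _ pb) eqxx.
  have ab : a != b by apply/eqP => eab; move: aab; rewrite eab (negbTE (adj_irr b)).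
  have vu : v0 != u0 by rewrite eq_sym.
  exists b, [ffun x : {x : V | x != b} => col (val x)]; split.
  - apply: (@crit_of_col _ adj r col b hcrit) => x y xb yb _ axy.
    by rewrite -val_eqE /=; apply: key.
  - rewrite inE; apply/andP; split.
      apply/forallP => x; apply/forallP => y; apply/implyP => axy.
      by rewrite !ffunE -val_eqE; exact: (key _ _ (valP x) (valP y) axy).
    apply/eqP; rewrite /ycnt.
    have -> : [set x : {x : V | x != b} | adj b (val x) && ([ffun x => col (val x)] x == i)]
              = [set exist _ a ab].
      apply/setP => x; rewrite !inE ffunE -val_eqE /=.
      apply/idP/idP.
        case/andP => abx /eqP cx.
        have := hom b (val x) abx; rewrite pb /G /turan_plus /turan cx v0r !eqxx (negbTE vu) /=.
        move=> /eqP hx; apply/eqP; apply: val_inj => /=; apply: inj; by rewrite hx pa.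
      by move/eqP ->; rewrite /= adj_sym aab /= pa u0r.
    by rewrite cards1.
  - rewrite inE phiH pb eqxx /=; apply/forallP => x; by rewrite ffunE.
rewrite /Mcount big_distrl /=; apply: leq_sum => b _.
rewrite -(sum1_card (mem (goodset adj i b))) big_distrl /=; apply: leq_sum => c cgood; rewrite mul1n.
move: cgood; rewrite inE => /andP[cprop /eqP cy].
have /cards1P [a' ha'] : #|[set x | adj b (val x) && (c x == i)]| == 1%N by apply/eqP.
have : a' \in [set x | adj b (val x) && (c x == i)] by rewrite ha' set11.
rewrite inE => /andP[aba /eqP ca].
set a := val a'.
have ab : a != b := valP a'.
have vu : v0 != u0 by rewrite eq_sym.
have phia : forall phi, phi \in B b c -> phi a = u0.
  move=> phi; rewrite inE => /andP[phiH /andP[/eqP pb /forallP pc]].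
  have [_ hom] := hH phi phiH.
  have := hom b a aba; rewrite /G /turan_plus /turan pb.
  have -> : (phi a %% r = i)%N by have /eqP -> := pc a'; rewrite ca.
  by rewrite v0r !eqxx (negbTE vu) /= => /eqP.
have phib : forall phi, phi \in B b c -> phi b = v0.
  by move=> phi; rewrite inE => /andP[_ /andP[/eqP pb _]].
have phimod : forall phi x (xb : x != b), phi \in B b c -> (phi x %% r)%N = c (exist _ x xb).
  move=> phi x xb; rewrite inE => /andP[_ /andP[_ /forallP pc]].
  by have /eqP := pc (exist _ x xb).
pose k := (n %/ r).+1.
pose g (phi : {ffun V -> 'I_n}) : {ffun {x : V | x \notin [set a; b]} -> 'I_k} :=
  [ffun x => inord (phi (val x) %/ r)].
have hk : forall (phi : {ffun V -> 'I_n}) x, (phi x %/ r < k)%N.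
  by move=> phi x; rewrite ltnS leq_div2r // ltnW.
apply: (leq_trans (@leq_card_in _ _ g (mem (B b c)) _)).
  move=> phi1 phi2 h1 h2 /ffunP eqg; apply/ffunP => x.
  have [-> | xb] := eqVneq x b; first by rewrite !phib.
  have [-> | xa] := eqVneq x a; first by rewrite !phia.
  have hx : x \notin [set a; b] by rewrite !inE negb_or xa xb.
  have := eqg (exist _ x hx); rewrite !ffunE /= => /(congr1 (@nat_of_ord k)).
  rewrite !inordK ?hk // => hdiv.
  apply: val_inj; rewrite /= (divn_eq (phi1 x) r) (divn_eq (phi2 x) r) hdiv.
  by rewrite (phimod phi1 x xb h1) (phimod phi2 x xb h2).
rewrite card_ffun card_ord card_sig.
have -> : #|[pred x | x \notin [set a; b]]| = #|~: [set a; b]|.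
  by apply: eq_card => x; rewrite !inE.
by rewrite -(cardsC [set a; b]) cards2 ab addKn.
Qed.

Lemma aut_gt0 (V : finType) (adj : rel V) : (0 < Defs.aut adj)%N.
Proof.
rewrite /Defs.aut card_gt0; apply/set0Pn; exists 1%g; rewrite inE.
by apply/forallP => x; apply/forallP => y; rewrite !perm1.
Qed.

Lemma cnF_bound (V : finType) r (adj : rel V) (i : 'I_r) n :
  (i + r < n)%N -> simple_graph adj -> r_critical r adj ->
  (cnF r adj n <= (Mcount adj i * (n %/ r).+1 ^ (#|V| - 2)) %/ Defs.aut adj)%N.
Proof.
move=> hin hs hcrit.
have hi : (i < n)%N by apply: leq_ltn_trans hin; apply: leq_addr.
pose u0 : 'I_n := Ordinal hi. pose v0 : 'I_n := Ordinal hin.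
have r0 : (0 < r)%N by apply: (leq_ltn_trans (leq0n _) (ltn_ord i)).
have hadd : addable r u0 v0.
  rewrite /addable /turan /= -val_eqE /= -{1}[val i]addn0 eqn_add2l eq_sym -lt0n r0 /=.
  by rewrite modnDr eqxx.
apply: (leq_trans (@bigminn_le _ (fun p : 'I_n * 'I_n => addable r p.1 p.2) _ _ (u0, v0) hadd)).
rewrite /copies leq_div2r //.
exact: (@count_homs V r adj i n u0 v0 erefl erefl hs hcrit).
Qed.

Local Open Scope ring_scope.

Lemma pow_bound (R : realFieldType) (a h : R) e :
  0 <= a <= 1 -> 0 <= h <= 1 -> (a + h) ^+ e <= a ^+ e + h * (e%:R * 2 ^+ e).
Proof.
move=> /andP[a0 a1] /andP[h0 h1]; elim: e => [|e IH]; first by rewrite !expr0 mul0r mulr0 addr0.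
have ae1 : a ^+ e <= 1 by apply: exprn_ile1.
have ae0 : 0 <= a ^+ e by apply: exprn_ge0.
have t0 : 0 <= 2 ^+ e :> R by apply: exprn_ge0.
have t1 : 0 <= e%:R * 2 ^+ e :> R by apply: mulr_ge0.
rewrite exprS (exprS a) (exprS 2).
apply: (le_trans (ler_wpM2l (addr_ge0 a0 h0) IH)).
have P1 : 1 <= 2 ^+ e :> R by apply: exprn_ege1; lra.
set P := 2 ^+ e in P1 t0 t1 *; set W := a ^+ e in ae1 ae0 *; set E := e%:R in t1 *.
have E0 : 0 <= E by rewrite /E ler0n.
have k1 : h * W <= h * P by apply: ler_wpM2l => //; lra.
have k2 : (a + h) * (h * (E * P)) <= 2 * (h * (E * P)).
  by apply: ler_wpM2r; [apply: mulr_ge0 => //; apply: mulr_ge0 => //; lra | lra].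
have hP : 0 <= h * P by apply: mulr_ge0 => //; lra.
rewrite -natr1 -/E.
nra.
Qed.

Lemma natdiv_le (R : realFieldType) (q b : nat) : (0 < b)%N ->
  ((q %/ b)%:R : R) <= q%:R / b%:R.
Proof.
move=> b0; have bR : 0 < b%:R :> R by rewrite ltr0n.
rewrite ler_pdivlMr // -natrM ler_nat; exact: leq_divM.
Qed.

Lemma alpha_le (R : realType) (V : finType) r (adj : rel V) (alpha : R) (i : 'I_r) :
  simple_graph adj -> r_critical r adj -> (3 <= #|V|)%N -> is_alphaF r adj alpha ->
  alpha <= (Mcount adj i)%:R / (Defs.aut adj)%:R * (r%:R ^- (#|V| - 2)).
Proof.
move=> hs hcrit hV [C [N hC]].
have r0 : (0 < r)%N by apply: (leq_ltn_trans (leq0n _) (ltn_ord i)).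
have rR : 0 < r%:R :> R by rewrite ltr0n.
set e := (#|V| - 2)%N.
have e1 : (0 < e)%N by rewrite /e subn_gt0.
have he : (#|V| - 3 = e.-1)%N by rewrite /e -subnS.
have aut0 : 0 < (Defs.aut adj)%:R :> R by rewrite ltr0n aut_gt0.
set A := (Mcount adj i)%:R / (Defs.aut adj)%:R.
have A0 : 0 <= A by apply: divr_ge0; rewrite ler0n.
set Q := A * r%:R ^- e.
rewrite leNgt; apply/negP => hlt.
set d := alpha - Q.
have d0 : 0 < d by rewrite /d subr_gt0.
set K := A * (e%:R * 2 ^+ e) + C.
pose n := (maxn N (i + r).+1 + Num.Def.archi_bound (`|K| / d))%N.
have hnN : (N <= n)%N by apply: (leq_trans (leq_maxl N (i + r).+1)); apply: leq_addr.
have hnir : (i + r < n)%N by apply: (leq_trans (leq_maxr N (i + r).+1)); apply: leq_addr.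
have hnK : `|K| / d < n%:R.
  apply: (lt_le_trans (archi_boundP _)); first by apply: divr_ge0 => //; apply: ltW.
  by rewrite ler_nat /n leq_addl.
set x : R := n%:R.
have x0 : 0 < x by rewrite /x ltr0n (leq_ltn_trans (leq0n _) hnir).
have h1 : alpha * x ^+ e <= (cnF r adj n)%:R + C * x ^+ e.-1.
  have := hC n hnN; rewrite he -/e -/x => /ler_normlP [hh _].
  rewrite opprB in hh; lra.
have h2 : (cnF r adj n)%:R <= A * ((n %/ r).+1)%:R ^+ e.
  apply: (@le_trans _ _ (((Mcount adj i * (n %/ r).+1 ^ e) %/ Defs.aut adj)%:R)).
    by rewrite ler_nat; exact: cnF_bound.
  apply: (le_trans (natdiv_le _ _ (aut_gt0 adj))).
  by rewrite natrM natrX /A mulrAC.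
have h3 : ((n %/ r).+1)%:R <= x / r%:R + 1 :> R.
  by rewrite -natr1 lerD2r ler_pdivlMr // -natrM ler_nat; exact: leq_divM.
have h4 : ((n %/ r).+1)%:R ^+ e <= (x / r%:R + 1) ^+ e.
  by apply: lerXn2r; rewrite ?nnegrE ?ler0n //; apply: addr_ge0 => //; apply: divr_ge0; apply: ltW.
have eqx : x / r%:R + 1 = x * (r%:R^-1 + x^-1) by rewrite mulrDr mulfV ?gt_eqF.
set z := x ^+ e.
have z0 : 0 < z by apply: exprn_gt0.
have zy : x ^+ e.-1 = z / x by rewrite /z -(prednK e1) exprS mulrC mulKf ?gt_eqF.
set T := (r%:R^-1 + x^-1) ^+ e.
have h5 : alpha <= A * T + C / x.
  rewrite -(ler_pM2r z0) mulrDl.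
  have : alpha * z <= A * (z * T) + C * (z / x).
    rewrite -zy /T -exprMn -eqx; apply: (le_trans h1); apply: lerD => //.
    apply: (le_trans h2); apply: ler_wpM2l => //.
  have -> : A * T * z + C / x * z = A * (z * T) + C * (z / x) by ring.
  by [].
have x1 : 1 <= x by rewrite /x ler1n (leq_ltn_trans (leq0n _) hnir).
have h6 : T <= r%:R ^- e + x^-1 * (e%:R * 2 ^+ e).
  rewrite /T -exprVn; apply: pow_bound.
    by rewrite invr_ge0 (ltW rR) /= invf_le1 // ler1n.
  by rewrite invr_ge0 (ltW x0) /= invf_le1.
have h7 : d <= K / x.
  rewrite /d /K /Q mulrDl; move: h5; set u := A * T.
  have : u <= A * (r%:R ^- e + x^-1 * (e%:R * 2 ^+ e)) by apply: ler_wpM2l.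
  rewrite mulrDr (mulrC x^-1) mulrA. lra.
have h8 : `|K| / x < d.
  rewrite ltr_pdivrMr // mulrC -ltr_pdivrMr //.
have : K / x <= `|K| / x by apply: ler_wpM2r; [rewrite invr_ge0 ltW | apply: ler_norm].
lra.
Qed.

Definition Tm (R : realType) (V : finType) r (adj : rel V) (u : V)
  (c : {ffun {x : V | x != u} -> 'I_r}) (xi : 'I_r -> R) : R :=
  \prod_(j < r) (r%:R ^- xcnt adj c j * xi j ^+ ycnt adj c j).

Lemma PF_evalE (R : realType) (V : finType) r (adj : rel V) (xi : 'I_r -> R) :
  PF_eval adj xi = (Defs.aut adj)%:R^-1 *
    \sum_(u | critical_vertex r adj u)
      \sum_(c : {ffun {x : V | x != u} -> 'I_r} | proper_u adj c) Tm adj c xi.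
Proof.
rewrite /PF_eval /PF mevalZ; congr (_ * _).
rewrite (big_morph _ (mevalD xi) (meval0 xi)); apply: eq_bigr => u _.
rewrite (big_morph _ (mevalD xi) (meval0 xi)); apply: eq_bigr => c _.
rewrite (big_morph _ (@mevalM _ _ xi) (meval1 xi)) /Tm; apply: eq_bigr => j _.
rewrite mevalZ (rmorphXn (meval xi)).
by congr (_ * _ ^+ _); apply: mevalXU.
Qed.

Lemma xy_card (V : finType) r (adj : rel V) (u : V)
  (c : {ffun {x : V | x != u} -> 'I_r}) j :
  (xcnt adj c j + ycnt adj c j = #|[set x | c x == j]|)%N.
Proof.
rewrite /xcnt /ycnt -(cardsID [set x | adj u (val x)] [set x | c x == j]) addnC.
by congr (_ + _); apply: eq_card => x; rewrite !inE // andbC.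
Qed.

Lemma card_sum_nat (T : finType) (P : pred T) : #|[set x | P x]| = (\sum_x (P x : nat))%N.
Proof. by rewrite -sum1dep_card big_mkcond /=; apply: eq_bigr => x _; case: (P x). Qed.

Lemma xy_sum (V : finType) r (adj : rel V) (u : V)
  (c : {ffun {x : V | x != u} -> 'I_r}) :
  (\sum_(j < r) (xcnt adj c j + ycnt adj c j) = #|V|.-1)%N.
Proof.
under eq_bigr do rewrite xy_card card_sum_nat.
rewrite exchange_big /=.
rewrite (eq_bigr (fun _ => 1%N)) => [|x _]; last first.
  rewrite (eq_bigr (fun j => (j == c x : nat))) => [|j _]; last by rewrite eq_sym.
  by rewrite -big_mkcond /= big_pred1_eq.
by rewrite sum1_card card_sig cardC1.
Qed.

Lemma Tm_eq (R : realType) (V : finType) r (adj : rel V) (u : V)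
  (c : {ffun {x : V | x != u} -> 'I_r}) (xi : 'I_r -> R) : (0 < r)%N ->
  Tm adj c xi = r%:R ^- #|V|.-1 * \prod_(j < r) (r%:R * xi j) ^+ ycnt adj c j.
Proof.
move=> r0; have rn : r%:R != 0 :> R by rewrite pnatr_eq0 -lt0n.
have fac : forall j, r%:R ^- xcnt adj c j * xi j ^+ ycnt adj c j =
    r%:R ^- (xcnt adj c j + ycnt adj c j) * (r%:R * xi j) ^+ ycnt adj c j.
  move=> j; rewrite exprMn exprD invfM -!mulrA; congr (_ * _).
  by rewrite mulrA mulVf ?mul1r // expf_neq0.
rewrite /Tm (eq_bigr _ (fun j _ => fac j)) big_split /=.
by rewrite prodfV prodrXr xy_sum.
Qed.

Lemma totdeg_term (R : realType) (V : finType) r (adj : rel V) :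
  (r.+1 <= PF_totdeg R r adj)%N ->
  exists u, exists c : {ffun {x : V | x != u} -> 'I_r},
    [/\ critical_vertex r adj u, proper_u adj c & (r.+1 <= \sum_(j < r) ycnt adj c j)%N].
Proof.
move=> hdeg.
case: (boolP [exists u, exists c : {ffun {x : V | x != u} -> 'I_r},
    [&& critical_vertex r adj u, proper_u adj c & (r.+1 <= \sum_(j < r) ycnt adj c j)%N]]).
  by case/existsP => u /existsP [c /and3P [h1 h2 h3]]; exists u, c.
move=> hno; exfalso; move: hdeg; rewrite /PF_totdeg.
suff hs : (msize (PF R r adj) <= r.+1)%N.
  move=> hd; have h2 : ((msize (PF R r adj)).-1 <= r)%N by rewrite -subn1 leq_subLR add1n.
  by have := leq_trans hd h2; rewrite ltnn.
rewrite /PF; apply: (leq_trans (msizeZ_le _ _)).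
apply: (leq_trans (msize_sum _ _ _)); apply/bigmax_leqP => u hu.
apply: (leq_trans (msize_sum _ _ _)); apply/bigmax_leqP => c hc.
rewrite scaler_prod; apply: (leq_trans (msizeZ_le _ _)).
rewrite mprodXnE msizeX mdeg_sum ltnS.
have : ~~ (r.+1 <= \sum_(j < r) ycnt adj c j)%N.
  apply/negP => hh; move/existsP: hno; apply; exists u; apply/existsP; exists c.
  by rewrite hu hc hh.
rewrite -ltnNge ltnS; apply: leq_trans; apply: leq_sum => j _.
by rewrite mdegMn mdeg1 mul1n.
Qed.

Definition sw r (i j z : 'I_r) : 'I_r := if z == i then j else if z == j then i else z.

Lemma swK r (i j : 'I_r) : involutive (sw i j).
Proof.
move=> z; rewrite /sw.
have [zi|zi] := eqVneq z i; first by rewrite eqxx; case: eqVneq => // ->; rewrite -zi.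
have [zj|zj] := eqVneq z j; first by rewrite eqxx.
by rewrite (negbTE zi) (negbTE zj).
Qed.

Lemma sw_eqi r (i j z : 'I_r) : (sw i j z == i) = (z == j).
Proof.
rewrite /sw; have [zi|zi] := eqVneq z i.
  by rewrite zi eq_sym.
have [zj|zj] := eqVneq z j; first by rewrite eqxx.
by rewrite (negbTE zi).
Qed.

Lemma term_y2 (R : realType) (V : finType) r (adj : rel V) :
  (r.+1 <= PF_totdeg R r adj)%N -> forall i : 'I_r,
  exists u, exists c : {ffun {x : V | x != u} -> 'I_r},
    [/\ critical_vertex r adj u, proper_u adj c & (2 <= ycnt adj c i)%N].
Proof.
move=> /totdeg_term [u [c [hu hc hs]]] i.
have [j hj] : exists j, (2 <= ycnt adj c j)%N.
  case: (boolP [exists j, 2 <= ycnt adj c j]%N); first by case/existsP => j hj; exists j.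
  move=> hno; exfalso; move: hs; apply/negP; rewrite -ltnNge ltnS.
  apply: (@leq_trans (\sum_(j < r) 1)%N); last by rewrite sum1_card card_ord.
  apply: leq_sum => j _.
  by rewrite leqNgt; apply/negP => hj; move/existsP: hno; apply; exists j.
exists u, [ffun x => sw i j (c x)]; split => //.
  apply/forallP => x; apply/forallP => y; apply/implyP => axy.
  have /forallP /(_ y) /implyP /(_ axy) := (forallP hc) x.
  by rewrite !ffunE (inj_eq (can_inj (swK i j))).
rewrite /ycnt; congr (2 <= _)%N: hj.
by apply: eq_card => x; rewrite !inE ffunE sw_eqi.
Qed.

Lemma bern1 (R : realFieldType) (t : R) (y : nat) :
  0 <= t <= 1 -> 1 - y%:R * t <= (1 - t) ^+ y.
Proof.
move=> /andP[t0 t1]; elim: y => [|y IH]; first by rewrite mul0r subr0 expr0.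
rewrite exprS -natr1.
have h1 : 0 <= 1 - t by lra.
have : (1 - t) * (1 - y%:R * t) <= (1 - t) * (1 - t) ^+ y by apply: ler_wpM2l.
have : 0 <= y%:R * t * t by apply: mulr_ge0 => //; apply: mulr_ge0; rewrite ?ler0n.
nra.
Qed.

Lemma prod_ge (R : realFieldType) (I : Type) (s : seq I) (P : pred I) (p : I -> R) :
  (forall k, 0 <= p k <= 1) ->
  1 - \sum_(k <- s | P k) (1 - p k) <= \prod_(k <- s | P k) p k.
Proof.
move=> hp; elim: s => [|a s IH]; first by rewrite !big_nil subr0.
rewrite !big_cons; case: (P a) => //.
have [pa0 pa1] := andP (hp a).
have S0 : 0 <= \sum_(k <- s | P k) (1 - p k).
  by apply: sumr_ge0 => k _; have := hp k; lra.
have Pi0 : 0 <= \prod_(k <- s | P k) p k by apply: prodr_ge0 => k _; have := hp k; lra.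
have : p a * (1 - \sum_(k <- s | P k) (1 - p k)) <= p a * \prod_(k <- s | P k) p k.
  by apply: ler_wpM2l.
have : 0 <= (1 - p a) * \sum_(k <- s | P k) (1 - p k) by apply: mulr_ge0 => //; lra.
nra.
Qed.

Lemma bern (R : realFieldType) (I : finType) (P : pred I) (t : I -> R) (y : I -> nat) :
  (forall j, 0 <= t j <= 1) ->
  1 - \sum_(j | P j) (y j)%:R * t j <= \prod_(j | P j) (1 - t j) ^+ y j.
Proof.
move=> ht; apply: le_trans (prod_ge _ _ _); last first.
  move=> k; have := ht k => /andP[t0 t1]; rewrite exprn_ge0 ?exprn_ile1 //; lra.
rewrite lerD2l lerN2; apply: ler_sum => j _.
have := bern1 (y j) (ht j); lra.
Qed.

Lemma sumy_le (V : finType) r (adj : rel V) (u : V)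
  (c : {ffun {x : V | x != u} -> 'I_r}) : (\sum_(j < r) ycnt adj c j <= #|V|)%N.
Proof.
apply: (@leq_trans (\sum_(j < r) (xcnt adj c j + ycnt adj c j))); first by apply: leq_sum => j _; apply: leq_addl.
by rewrite xy_sum leq_pred.
Qed.

Lemma ycnt_le (V : finType) r (adj : rel V) (u : V)
  (c : {ffun {x : V | x != u} -> 'I_r}) j : (ycnt adj c j <= #|V|)%N.
Proof.
apply: leq_trans (sumy_le adj c); rewrite (bigD1 j) //=; exact: leq_addr.
Qed.

Lemma Tm_lb (R : realType) (V : finType) r (adj : rel V) (u : V)
  (c : {ffun {x : V | x != u} -> 'I_r}) (xi : 'I_r -> R) (a : R) : (0 < r)%N ->
  0 <= a <= 1 -> (forall j, a <= r%:R * xi j) ->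
  r%:R ^- #|V|.-1 * a ^+ #|V| <= Tm adj c xi.
Proof.
move=> r0 /andP[a0 a1] ha; rewrite Tm_eq //; apply: ler_wpM2l.
  by rewrite invr_ge0 exprn_ge0 // ler0n.
apply: (le_trans (ler_wiXn2l a0 a1 (sumy_le adj c))).
rewrite -prodrXr; apply: ler_prod => j _.
rewrite exprn_ge0 //=; apply: lerXn2r => //; rewrite nnegrE //.
exact: le_trans a0 (ha j).
Qed.

Lemma Tm_good (R : realType) (V : finType) r (adj : rel V) (u : V)
  (c : {ffun {x : V | x != u} -> 'I_r}) (xi : 'I_r -> R) (i : 'I_r) (eps : R) :
  (0 < r)%N -> ycnt adj c i = 1%N -> (forall j, 0 <= r%:R * xi j <= 1) ->
  \sum_(j | j != i) (1 - r%:R * xi j) = r%:R * xi i - r%:R * eps -> 0 <= eps ->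
  #|V|%:R * (r%:R * eps) <= 2^-1 ->
  #|V|%:R * (\sum_(j | j != i) (1 - r%:R * xi j)) <= 2^-1 ->
  r%:R ^- #|V|.-1 * (r%:R * eps) <= Tm adj c xi.
Proof.
move=> r0 hy hw hS e0 h1 h2; rewrite Tm_eq //; apply: ler_wpM2l.
  by rewrite invr_ge0 exprn_ge0 // ler0n.
set S := \sum_(j | j != i) (1 - r%:R * xi j) in hS h2 *.
set fR := #|V|%:R in h1 h2 *.
have S0 : 0 <= S by apply: sumr_ge0 => j _; have := hw j; lra.
rewrite (bigD1 i) //= hy expr1.
have hb := @bern R _ (fun j => j != i) (fun j => 1 - r%:R * xi j) (fun j => ycnt adj c j).
have hb2 : 1 - \sum_(j | j != i) (ycnt adj c j)%:R * (1 - r%:R * xi j) <=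
           \prod_(j | j != i) (r%:R * xi j) ^+ ycnt adj c j.
  have -> : \prod_(j | j != i) (r%:R * xi j) ^+ ycnt adj c j =
            \prod_(j | j != i) (1 - (1 - r%:R * xi j)) ^+ ycnt adj c j.
    by apply: eq_bigr => j _; rewrite opprB addrC subrK.
  by apply: hb => j; have := hw j; lra.
have hb3 : \sum_(j | j != i) (ycnt adj c j)%:R * (1 - r%:R * xi j) <= fR * S.
  rewrite /S mulr_sumr; apply: ler_sum => j _; apply: ler_wpM2r.
    by have := hw j; lra.
  by rewrite /fR ler_nat ycnt_le.
have wi0 : 0 <= r%:R * xi i by have := hw i; lra.
have : (r%:R * xi i) * (1 - fR * S) <= (r%:R * xi i) * \prod_(j | j != i) (r%:R * xi j) ^+ ycnt adj c j.
  by apply: ler_wpM2l => //; lra.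
have re0 : 0 <= r%:R * eps by apply: mulr_ge0; rewrite ?ler0n.
have : 0 <= S * (1 - fR * (r%:R * eps) - fR * S).
  by apply: mulr_ge0 => //; lra.
nra.
Qed.

Lemma sum_split (R : realType) (V : finType) r (adj : rel V) (i : 'I_r)
  (F : forall u : V, {ffun {x : V | x != u} -> 'I_r} -> R) u0 c0 :
  critical_vertex r adj u0 -> proper_u adj c0 -> ycnt adj c0 i != 1%N ->
  (forall u c, 0 <= F u c) ->
  \sum_(u | critical_vertex r adj u) \sum_(c | c \in goodset adj i u) F u c + F u0 c0 <=
  \sum_(u | critical_vertex r adj u) \sum_(c : {ffun {x : V | x != u} -> 'I_r} | proper_u adj c) F u c.
Proof.
move=> hu0 hc0 hy0 F0.
rewrite [X in _ <= X](eq_bigr (fun u => \sum_(c | c \in goodset adj i u) F u c +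
    \sum_(c : {ffun {x : V | x != u} -> 'I_r} | proper_u adj c && ~~ (ycnt adj c i == 1%N)) F u c)); last first.
  move=> u _; rewrite (bigID (fun c => ycnt adj c i == 1%N)) /=; congr (_ + _).
  by apply: eq_bigl => c; rewrite inE.
rewrite big_split /= lerD2l (bigD1 u0) //= (bigD1 c0) /=; last by rewrite hc0 hy0.
rewrite -addrA lerDl; apply: addr_ge0; apply: sumr_ge0 => *; last apply: sumr_ge0 => *; exact: F0.
Qed.

Lemma sum_ge_term (R : realType) (V : finType) r (adj : rel V)
  (F : forall u : V, {ffun {x : V | x != u} -> 'I_r} -> R) u0 c0 :
  critical_vertex r adj u0 -> proper_u adj c0 -> (forall u c, 0 <= F u c) ->
  F u0 c0 <=
  \sum_(u | critical_vertex r adj u) \sum_(c : {ffun {x : V | x != u} -> 'I_r} | proper_u adj c) F u c.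
Proof.
move=> hu0 hc0 F0; rewrite (bigD1 u0) //= (bigD1 c0) //= -addrA lerDl.
by apply: addr_ge0; apply: sumr_ge0 => *; last apply: sumr_ge0 => *; exact: F0.
Qed.

Lemma Tm_ge0 (R : realType) (V : finType) r (adj : rel V) (u : V)
  (c : {ffun {x : V | x != u} -> 'I_r}) (xi : 'I_r -> R) :
  (forall j, 0 <= xi j) -> 0 <= Tm adj c xi.
Proof.
move=> h; apply: prodr_ge0 => j _; apply: mulr_ge0; last exact: exprn_ge0.
by rewrite invr_ge0 exprn_ge0 // ler0n.
Qed.

Lemma main_lower (R : realType) (V : finType) r (adj : rel V) (alpha : R) :
  (2 <= r)%N -> r_critical r adj -> (3 <= #|V|)%N -> (r.+1 <= PF_totdeg R r adj)%N ->
  0 < alpha ->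
  (forall i : 'I_r, alpha <= (Mcount adj i)%:R / (Defs.aut adj)%:R * r%:R ^- (#|V| - 2)) ->
  exists2 delta : R, 0 < delta & forall eps, 0 < eps -> eps < delta ->
    exists2 L, alpha * eps < L &
      forall xi : 'I_r -> R, S_rho ((r%:R - 1) / r%:R + eps) xi -> L <= PF_eval adj xi.
Proof.
move=> r2 hcrit hV hdeg a0 hQ.
have r0 : (0 < r)%N by apply: leq_trans r2.
have rR : 0 < r%:R :> R by rewrite ltr0n.
set f := #|V|.
set fR : R := f%:R.
have fR0 : 0 < fR by rewrite /fR ltr0n (leq_trans _ hV).
have fR1 : 1 <= fR by rewrite /fR ler1n (leq_trans _ hV).
set aR : R := (Defs.aut adj)%:R.
have aR0 : 0 < aR by rewrite /aR ltr0n aut_gt0.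
set eta : R := (2 * fR * r%:R)^-1.
have eta0 : 0 < eta by rewrite /eta invr_gt0 !mulr_gt0.
have reta : r%:R * eta = (2 * fR)^-1.
  by rewrite /eta invfM mulrCA mulfV ?mulr1 ?gt_eqF.
have reta1 : r%:R * eta <= 1.
  by rewrite reta invf_le1 ?mulr_gt0 //; lra.
have reta0 : 0 <= r%:R * eta by apply: mulr_ge0; lra.
set rk : R := r%:R ^- f.-1.
have rk0 : 0 < rk by rewrite /rk invr_gt0 exprn_gt0.
set c1 := rk * (r%:R * eta) ^+ f.
have c10 : 0 < c1 by rewrite /c1 mulr_gt0 // exprn_gt0 // mulr_gt0.
exists (Num.min eta (c1 / (aR * alpha))).
  by rewrite lt_min eta0 divr_gt0 // mulr_gt0.
move=> eps e0; rewrite lt_min => /andP[heta hc1].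
have re0 : 0 < r%:R * eps by apply: mulr_gt0.
have reps : r%:R * eps <= r%:R * eta by apply: ler_wpM2l; lra.
set gam := aR^-1 * (rk * (r%:R * eps) ^+ f).
have gam0 : 0 < gam by rewrite /gam mulr_gt0 ?invr_gt0 // mulr_gt0 // exprn_gt0.
exists (Num.min (aR^-1 * c1) (alpha * eps + gam)).
  rewrite lt_min; apply/andP; split; last by lra.
  move: hc1; rewrite ltr_pdivlMr ?mulr_gt0 // => hc1.
  by rewrite [aR^-1 * c1]mulrC ltr_pdivlMr //; lra.
move=> xi [hxi hsum].
rewrite PF_evalE -/aR.
have hxi0 : forall j, 0 <= xi j by move=> j; have /andP[] := hxi j.
have hw : forall j, 0 <= r%:R * xi j <= 1.
  move=> j; have /andP[h1 h2] := hxi j; rewrite mulr_ge0 ?ler0n //=.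
  by apply: (le_trans (ler_wpM2l _ h2)); rewrite ?ler0n // mulfV // gt_eqF.
have [i hmin] : exists i : 'I_r, forall j, xi i <= xi j.
  by case: (@arg_minP _ R 'I_r (Ordinal r0) xpredT xi isT) => i _ hi; exists i => j; apply: hi.
have [u0 [c0 [hu0 hc0 hy0]]] := term_y2 hdeg i.
have hS : \sum_(j | j != i) (1 - r%:R * xi j) = r%:R * xi i - r%:R * eps.
  have htot : \sum_(j < r) (1 - r%:R * xi j) = 1 - r%:R * eps.
    rewrite sumrB sumr_const card_ord -mulr_sumr hsum mulrDr [r%:R * (_ / _)]mulrC divfK ?gt_eqF //.
    lra.
  move: htot; rewrite (bigD1 i) //=; lra.
set S := \sum_(j | j != i) (1 - r%:R * xi j) in hS *.
have S0 : 0 <= S by apply: sumr_ge0 => j _; have := hw j; lra.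
have hwi : r%:R * eps <= r%:R * xi i by lra.
have Tm0 : forall u (c : {ffun {x : V | x != u} -> 'I_r}), 0 <= Tm adj c xi.
  by move=> u c; apply: Tm_ge0.
pose F0 := fun u (c : {ffun {x : V | x != u} -> 'I_r}) => Tm adj c xi.
have [hA|hB] := leP eta (xi i).
  rewrite ge_min; apply/orP; left; apply: ler_wpM2l; first by rewrite invr_ge0 ltW.
  apply: (le_trans _ (@sum_ge_term R V r adj F0 u0 c0 hu0 hc0 Tm0)).
  apply: Tm_lb => //; first by rewrite reta0 reta1.
  by move=> j; apply: ler_wpM2l; rewrite ?ler0n //; apply: le_trans hA (hmin j).
rewrite ge_min; apply/orP; right.
have half : fR * (r%:R * eta) = 2^-1 by rewrite reta invfM mulrCA mulfV ?mulr1 ?gt_eqF.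
have hG : forall u (c : {ffun {x : V | x != u} -> 'I_r}), c \in goodset adj i u ->
    rk * (r%:R * eps) <= Tm adj c xi.
  move=> u c; rewrite inE => /andP[_ /eqP hy]; apply: (Tm_good r0 hy hw hS) => //.
  - exact: ltW.
  - rewrite -half; apply: ler_wpM2l; [exact: ltW | exact: reps].
  - rewrite -half; apply: ler_wpM2l; first exact: ltW.
    have : r%:R * xi i <= r%:R * eta by apply: ler_wpM2l; [rewrite ler0n | exact: ltW].
    rewrite -/S; lra.
have hgood : (Mcount adj i)%:R * (rk * (r%:R * eps)) <=
    \sum_(u | critical_vertex r adj u) \sum_(c | c \in goodset adj i u) Tm adj c xi.
  rewrite /Mcount natr_sum mulr_suml; apply: ler_sum => u _.
  rewrite mulr_natl -sumr_const; apply: ler_sum => c; exact: hG.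
have hsp := @sum_split R V r adj i F0 u0 c0 hu0 hc0.
have hy1 : ycnt adj c0 i != 1%N by rewrite neq_ltn hy0 orbT.
have ht0 : rk * (r%:R * eps) ^+ f <= Tm adj c0 xi.
  apply: Tm_lb => //; first by rewrite (ltW re0) /= (le_trans reps reta1).
  by move=> j; apply: (le_trans hwi); apply: ler_wpM2l; rewrite ?ler0n.
have htot := hsp hy1 Tm0; rewrite /F0 /= in htot.
set Tot := \sum_(u | critical_vertex r adj u) _ in htot *.
have hrk : rk * r%:R = r%:R ^- (f - 2).
  rewrite /rk.
  have -> : f.-1 = (f - 2).+1 by rewrite subnSK ?subn1 // ltnW.
  by rewrite exprS invfM mulrAC mulVf ?mul1r ?gt_eqF.
have hal : alpha * eps <= aR^-1 * ((Mcount adj i)%:R * (rk * (r%:R * eps))).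
  have := ler_wpM2r (ltW e0) (hQ i); rewrite -/f -/aR -hrk => h.
  apply: (le_trans h); rewrite le_eqVlt; apply/orP; left; apply/eqP; ring.
have : aR^-1 * ((Mcount adj i)%:R * (rk * (r%:R * eps)) + rk * (r%:R * eps) ^+ f) <= aR^-1 * Tot.
  by apply: ler_wpM2l; [rewrite invr_ge0 ltW | lra].
rewrite /gam mulrDr; lra.
Qed.

Lemma card_ge_chi (V : finType) (adj : rel V) : (chi adj [set: V] <= #|V|)%N.
Proof.
apply: chi_le; apply: (@mk_col _ _ _ _ (fun x => enum_rank x)) => x y _ _ nxy _.
by apply/eqP => /enum_rank_inj exy; move: nxy; rewrite exy eqxx.
Qed.

Theorem lemma6 (R : realType) (r : nat) (V : finType) (adj : rel V) (alpha : R) :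
  (2 <= r)%N ->
  simple_graph adj ->
  r_critical r adj ->
  0 < alpha ->
  is_alphaF r adj alpha ->
  (0 < rhoF r adj alpha - ((1 - r%:R^-1)%:E))%E.
Proof.
move=> r2 hs hcrit a0 hal.
have r0 : (0 < r)%N by apply: leq_trans r2.
have rR : 0 < r%:R :> R by rewrite ltr0n.
have hV : (3 <= #|V|)%N.
  have := card_ge_chi adj; rewrite hcrit.1; apply: leq_trans; by rewrite ltnS.
rewrite sube_gt0 /rhoF; case: ifP => hdeg; last by rewrite ltry.
have hQ := fun i => @alpha_le R V r adj alpha i hs hcrit hV hal.
have [delta d0 hmain] := main_lower r2 hcrit hV hdeg a0 hQ.
have hc : (r%:R - 1) / r%:R = 1 - r%:R^-1 :> R by rewrite mulrBl mulfV ?gt_eqF // mul1r.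
apply: (@lt_le_trans _ _ ((1 - r%:R^-1) + delta)%:E); first by rewrite lte_fin; lra.
apply/ereal_infP => _ [rho [/andP[hr1 hr2] hp] <-]; rewrite lee_fin.
rewrite leNgt; apply/negP => hlt.
set eps := rho - (r%:R - 1) / r%:R.
have e0 : 0 < eps by rewrite /eps subr_gt0.
have ed : eps < delta by rewrite /eps hc; lra.
have [L hL hxi] := hmain eps e0 ed.
have hrho : rho = (r%:R - 1) / r%:R + eps by rewrite /eps addrC subrK.
have : L <= p_rho r adj rho.
  apply: lb_le_inf.
    exists (PF_eval adj (fun _ : 'I_r => rho / r%:R)); exists (fun _ : 'I_r => rho / r%:R) => //.
    split.
      move=> j.
      have ri1 : r%:R^-1 <= 1 :> R by rewrite invf_le1 // ler1n.
      have rho0 : 0 <= rho by move: hr1; rewrite hc; lra.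
      apply/andP; split; first by apply: divr_ge0; rewrite ?ler0n.
      by rewrite -[X in _ <= X]mul1r; apply: ler_wpM2r; rewrite ?invr_ge0 ?ler0n //; lra.
    rewrite sumr_const card_ord.
    have -> : rho / r%:R *+ r = rho / r%:R * r%:R by rewrite mulr_natr.
    by rewrite divfK ?gt_eqF.
  move=> _ [xi hxi' <-]; apply: hxi; by rewrite -hrho.
move: hp; rewrite -/eps; lra.
Qed.
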